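(* Let $\|\!|\cdot|\!\|$ be any norm on $\ell^1$ equivalent to the usual norm, and let $Y=(\ell^1,\|\!|\cdot|\!\|)$ with closed unit ball $B_Y$. Let $(e_n)_{n\ge1}$ be the canonical basis of $\ell^1$, let $\tau$ be the weak$^\ast$ topology $\sigma(\ell^1,c_0)$, and let $$E=\left\{\tfrac{n}{n+1}\,\tfrac{e_n}{\|\!|e_n|\!\|}: n\in\mathbb{N}\right\}\cup\{0\},\qquad K=\overline{\mathrm{co}}^{\,\tau}(E).$$ Then $K=\overline{\mathrm{co}}(E)$ (norm closure), $K\subseteq B_Y$, $\sup\{\|\!|k|\!\|: k\in K\}=1$, and there is no $k\in K$ with $\|\!|k|\!\|=1$; in particular $K$ is a closed bounded convex subset of $Y$ that is not remotal from $0$.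
   Context: $\overline{\mathrm{co}}^{\,\tau}(E)$ denotes the $\tau$-closed convex hull and $\overline{\mathrm{co}}(E)$ the norm-closed convex hull. A set $C$ is remotal from $z$ if there exists $c_0\in C$ with $\|z-c_0\|=\sup\{\|z-c\|:c\in C\}$. *)

(* Defs.v *)
From Stdlib Require Import Reals List.
Open Scope R_scope.

Definition seqR := nat -> R.

Definition l1 (x : seqR) : Prop :=
  exists l, infinite_sum (fun k => Rabs (x k)) l.

Definition c0 (y : seqR) : Prop := Un_cv y 0.

Definition vzero : seqR := fun _ => 0.
Definition vadd (x y : seqR) : seqR := fun k => x k + y k.
Definition vscal (a : R) (x : seqR) : seqR := fun k => a * x k.
Definition vsub (x y : seqR) : seqR := fun k => x k - y k.

(* canonical basis vector (0-indexed: e n has a 1 at coordinate n) *)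
Definition e (n : nat) : seqR := fun k => if Nat.eqb k n then 1 else 0.

Definition equiv_l1_norm (N : seqR -> R) : Prop :=
  (forall x, l1 x -> 0 <= N x) /\
  (forall x, l1 x -> N x = 0 -> x = vzero) /\
  (forall a x, l1 x -> N (vscal a x) = Rabs a * N x) /\
  (forall x y, l1 x -> l1 y -> N (vadd x y) <= N x + N y) /\
  (exists c C, 0 < c /\ 0 < C /\
     forall x l, infinite_sum (fun k => Rabs (x k)) l ->
       c * l <= N x /\ N x <= C * l).

Definition convex (S : seqR -> Prop) : Prop :=
  forall x y t, S x -> S y -> 0 <= t <= 1 ->
    S (vadd (vscal t x) (vscal (1 - t) y)).

Definition wstar_open (U : seqR -> Prop) : Prop :=
  forall x, l1 x -> U x ->
    exists (ys : list seqR) (eps : R), Forall c0 ys /\ 0 < eps /\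
      forall z, l1 z ->
        (forall y, In y ys ->
           exists s, infinite_sum (fun k => (z k - x k) * y k) s /\ Rabs s < eps) ->
        U z.

Definition wstar_closed (S : seqR -> Prop) : Prop :=
  wstar_open (fun x => l1 x /\ ~ S x).

Definition norm_closed (N : seqR -> R) (S : seqR -> Prop) : Prop :=
  forall x, l1 x ->
    (forall eps, 0 < eps -> exists s, S s /\ l1 s /\ N (vsub x s) < eps) -> S x.

Definition wstar_closed_hull (A : seqR -> Prop) : seqR -> Prop :=
  fun x => l1 x /\ forall C, convex C -> wstar_closed C ->
     (forall a, A a -> C a) -> C x.

Definition norm_closed_hull (N : seqR -> R) (A : seqR -> Prop) : seqR -> Prop :=
  fun x => l1 x /\ forall C, convex C -> norm_closed N C ->
     (forall a, A a -> C a) -> C x.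

(* E = { n/(n+1) e_n / |||e_n||| : n >= 1 } u {0}, reindexed from 0 *)
Definition E_set (N : seqR -> R) : seqR -> Prop :=
  fun x => x = vzero \/
    exists n : nat, x = vscal (INR (n + 1) / INR (n + 2) / N (e n)) (e n).

Definition Nbounded (N : seqR -> R) (S : seqR -> Prop) : Prop :=
  exists M, forall x, S x -> N x <= M.

Definition remotal (N : seqR -> R) (C : seqR -> Prop) (z : seqR) : Prop :=
  exists c, C c /\ is_lub (fun r => exists c', C c' /\ r = N (vsub z c')) (N (vsub z c)).

(* Main.v *)
Require Import Defs.
From Stdlib Require Import Reals List Lra Lia Classical FunctionalExtensionality.
Open Scope R_scope.

Fixpoint psum (f : nat -> R) (m : nat) : R :=
  match m with O => 0 | S m => psum f m + f m end.

Lemma sum_psum f n : sum_f_R0 f n = psum f (S n).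
Proof. induction n; simpl in *; [lra|]. rewrite IHn. simpl. lra. Qed.

Lemma psum_le f g m : (forall k, (k < m)%nat -> f k <= g k) -> psum f m <= psum g m.
Proof. induction m; intros H; simpl; [lra|]. assert (f m <= g m) by (apply H; lia).
 assert (psum f m <= psum g m) by (apply IHm; intros; apply H; lia). lra. Qed.

Lemma psum_plus f g m : psum (fun k => f k + g k) m = psum f m + psum g m.
Proof. induction m; simpl; lra. Qed.

Lemma psum_scal c f m : psum (fun k => c * f k) m = c * psum f m.
Proof. induction m; simpl; try rewrite IHm; lra. Qed.

Lemma psum_nonneg f m : (forall k, 0 <= f k) -> 0 <= psum f m.
Proof. intros H; induction m; simpl; [lra|]. specialize (H m). lra. Qed.

Lemma psum_mono f m n : (forall k, 0 <= f k) -> (m <= n)%nat -> psum f m <= psum f n.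
Proof. intros H Hmn; induction Hmn; [lra|]. simpl. specialize (H m0). lra. Qed.

Lemma psum_term f k m : (forall k, 0 <= f k) -> (k < m)%nat -> f k <= psum f m.
Proof. intros H Hk. apply Rle_trans with (psum f (S k)).
 simpl. pose proof (psum_nonneg f k H). lra. apply psum_mono; auto. Qed.

Lemma psum_ext f g m : (forall k, (k < m)%nat -> f k = g k) -> psum f m = psum g m.
Proof. induction m; intros H; simpl; [lra|]. rewrite IHm, H; auto; intros; apply H; lia. Qed.

Lemma psum_opp f m : psum (fun k => - f k) m = - psum f m.
Proof. induction m; simpl; try rewrite IHm; lra. Qed.

Lemma nonneg_cv g M : (forall k, 0 <= g k) -> (forall m, psum g m <= M) ->
  exists l, infinite_sum g l /\ l <= M /\ (forall m, psum g m <= l).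
Proof.
 intros Hg HM.
 assert (Hgr : Un_growing (sum_f_R0 g)).
 { intros n. rewrite !sum_psum. simpl. specialize (Hg (S n)). simpl in Hg. lra. }
 destruct (growing_cv _ Hgr) as [l Hl].
 { exists M. intros r [i ->]. rewrite sum_psum. apply HM. }
 exists l. split; [exact Hl|]. split.
 - apply Rnot_lt_le. intros Hlt.
   destruct (Hl (l - M)) as [N0 HN0]; [lra|].
   specialize (HN0 N0 (le_n _)). unfold Rdist in HN0. rewrite sum_psum in HN0.
   specialize (HM (S N0)). apply Rabs_def2 in HN0. lra.
 - intros m. destruct m. simpl. apply Rle_trans with (sum_f_R0 g 0).
   rewrite sum_psum; simpl; specialize (Hg 0%nat); lra. apply growing_ineq; auto.
   rewrite <- sum_psum. apply growing_ineq; auto.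
Qed.

Lemma sum_facts g l : (forall k, 0 <= g k) -> infinite_sum g l ->
  (forall m, psum g m <= l) /\ (forall eta, 0 < eta -> exists m, l - psum g m < eta).
Proof.
 intros Hg Hl.
 assert (Hgr : Un_growing (sum_f_R0 g)).
 { intros n. rewrite !sum_psum. simpl. specialize (Hg (S n)). simpl in Hg. lra. }
 split.
 - intros m. destruct m. simpl. apply Rle_trans with (sum_f_R0 g 0).
   rewrite sum_psum; simpl; specialize (Hg 0%nat); lra. apply growing_ineq; auto.
   rewrite <- sum_psum. apply growing_ineq; auto.
 - intros eta Heta. destruct (Hl eta Heta) as [N0 HN0].
   exists (S N0). specialize (HN0 N0 (le_n _)). unfold Rdist in HN0. rewrite sum_psum in HN0.
   apply Rabs_def2 in HN0. lra.
Qed.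

Lemma cv_le_bound u l M : Un_cv u l -> (forall n, u n <= M) -> l <= M.
Proof. intros Hl HM. apply Rnot_lt_le. intros Hlt.
 destruct (Hl (l - M)) as [N0 HN0]; [lra|].
 specialize (HN0 N0 (le_n _)). unfold Rdist in HN0. specialize (HM N0).
 apply Rabs_def2 in HN0. lra. Qed.

Lemma abs_cv f M : (forall m, psum (fun k => Rabs (f k)) m <= M) ->
  exists s, infinite_sum f s /\ Rabs s <= M.
Proof.
 intros HM.
 set (fp := fun k => (Rabs (f k) + f k) / 2).
 set (fm := fun k => (Rabs (f k) - f k) / 2).
 assert (Hfp : forall k, 0 <= fp k) by (intros; unfold fp; pose proof (Rle_abs (- f k)); rewrite Rabs_Ropp in H; lra).
 assert (Hfm : forall k, 0 <= fm k) by (intros; unfold fm; pose proof (Rle_abs (f k)); lra).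
 destruct (nonneg_cv fp M Hfp) as [lp [Hlp _]].
 { intros m. apply Rle_trans with (psum (fun k => Rabs (f k)) m); auto.
   apply psum_le. intros k _. unfold fp. pose proof (Rle_abs (f k)); lra. }
 destruct (nonneg_cv fm M Hfm) as [lm [Hlm _]].
 { intros m. apply Rle_trans with (psum (fun k => Rabs (f k)) m); auto.
   apply psum_le. intros k _. unfold fm. pose proof (Rle_abs (- f k)); rewrite Rabs_Ropp in H; lra. }
 assert (Hs : infinite_sum f (lp - lm)).
 { pose proof (CV_minus _ _ _ _ Hlp Hlm) as H.
   intros eps Heps. destruct (H eps Heps) as [N0 HN0]. exists N0. intros n Hn.
   specialize (HN0 n Hn). simpl in HN0. rewrite <- minus_sum in HN0.
   erewrite sum_eq; [exact HN0|]. intros i _. unfold fp, fm. lra. }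
 exists (lp - lm). split; auto.
 apply Rabs_le. split.
 - assert (- (lp - lm) <= M); [|lra].
   apply (cv_le_bound (opp_seq (sum_f_R0 f))). apply CV_opp. exact Hs.
   intros n. unfold opp_seq. rewrite sum_psum.
   apply Rle_trans with (psum (fun k => Rabs (f k)) (S n)); auto.
   rewrite <- psum_opp.
   apply psum_le. intros k _. pose proof (Rle_abs (- f k)). rewrite Rabs_Ropp in H. lra.
 - apply (cv_le_bound (sum_f_R0 f)). exact Hs.
   intros n. rewrite sum_psum.
   apply Rle_trans with (psum (fun k => Rabs (f k)) (S n)); auto.
   apply psum_le. intros k _. apply Rle_abs.
Qed.

Lemma l1_bound x M : (forall m, psum (fun k => Rabs (x k)) m <= M) -> l1 x.
Proof. intros H. destruct (nonneg_cv _ M (fun k => Rabs_pos (x k)) H) as [l [Hl _]]. exists l; auto. Qed.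

Lemma l1_facts x : l1 x -> exists L, infinite_sum (fun k => Rabs (x k)) L /\
  (forall m, psum (fun k => Rabs (x k)) m <= L) /\
  (forall eta, 0 < eta -> exists m, L - psum (fun k => Rabs (x k)) m < eta).
Proof. intros [L HL]. exists L. destruct (sum_facts _ L (fun k => Rabs_pos (x k)) HL). auto. Qed.

Lemma l1_vzero : l1 vzero.
Proof. apply (l1_bound _ 0). intros m. rewrite (psum_ext _ (fun _ => 0)).
 induction m; simpl; try rewrite IHm; lra. intros. unfold vzero. apply Rabs_R0. Qed.

Lemma psum_delta n c m : 0 <= c -> psum (fun k => if Nat.eqb k n then c else 0) m <= c.
Proof. intros Hc. induction m; simpl; [lra|].
 destruct (Nat.eqb_spec m n).
 - subst. assert (psum (fun k => if Nat.eqb k n then c else 0) n = 0).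
   { clear IHm. rewrite (psum_ext _ (fun _ => 0)). clear. induction n; simpl; try rewrite IHn; lra.
     intros k Hk. destruct (Nat.eqb_spec k n); [lia|auto]. }
   lra.
 - lra. Qed.

Lemma l1_e n : l1 (e n).
Proof. apply (l1_bound _ 1). intros m.
 rewrite (psum_ext _ (fun k => if Nat.eqb k n then 1 else 0)). apply psum_delta; lra.
 intros k _. unfold e. destruct (Nat.eqb k n); [apply Rabs_R1|apply Rabs_R0]. Qed.

Lemma l1_vadd x y : l1 x -> l1 y -> l1 (vadd x y).
Proof. intros Hx Hy. destruct (l1_facts x Hx) as [Lx [_ [Hx' _]]].
 destruct (l1_facts y Hy) as [Ly [_ [Hy' _]]].
 apply (l1_bound _ (Lx + Ly)). intros m.
 apply Rle_trans with (psum (fun k => Rabs (x k) + Rabs (y k)) m).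
 apply psum_le. intros k _. unfold vadd. apply Rabs_triang.
 rewrite psum_plus. specialize (Hx' m). specialize (Hy' m). lra. Qed.

Lemma l1_vscal a x : l1 x -> l1 (vscal a x).
Proof. intros Hx. destruct (l1_facts x Hx) as [Lx [_ [Hx' _]]].
 apply (l1_bound _ (Rabs a * Lx)). intros m.
 rewrite (psum_ext _ (fun k => Rabs a * Rabs (x k))). rewrite psum_scal.
 apply Rmult_le_compat_l. apply Rabs_pos. auto.
 intros. unfold vscal. apply Rabs_mult. Qed.

Lemma l1_vsub x y : l1 x -> l1 y -> l1 (vsub x y).
Proof. intros Hx Hy. replace (vsub x y) with (vadd x (vscal (-1) y)).
 apply l1_vadd; auto; apply l1_vscal; auto.
 apply functional_extensionality; intros k; unfold vadd, vscal, vsub; lra. Qed.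

Lemma N_upper N (HN : equiv_l1_norm N) : exists Cn, 0 < Cn /\
  forall v M, (forall m, psum (fun k => Rabs (v k)) m <= M) -> N v <= Cn * M.
Proof. destruct HN as [_ [_ [_ [_ [c [Cn [Hc [HC Heq]]]]]]]].
 exists Cn. split; auto. intros v M HM.
 destruct (nonneg_cv _ M (fun k => Rabs_pos (v k)) HM) as [l [Hl [HlM _]]].
 destruct (Heq v l Hl) as [_ H]. apply Rle_trans with (Cn * l); auto.
 apply Rmult_le_compat_l; lra. Qed.

Lemma N_lower N (HN : equiv_l1_norm N) : exists c, 0 < c /\
  forall v j, l1 v -> Rabs (v j) <= N v / c.
Proof. destruct HN as [_ [_ [_ [_ [c [Cn [Hc [HC Heq]]]]]]]].
 exists c. split; auto. intros v j [l Hl].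
 destruct (Heq v l Hl) as [H _].
 destruct (sum_facts _ l (fun k => Rabs_pos (v k)) Hl) as [Hp _].
 assert (Rabs (v j) <= l).
 { apply Rle_trans with (psum (fun k => Rabs (v k)) (S j)); auto.
   apply (psum_term (fun k => Rabs (v k))). intros; apply Rabs_pos. lia. }
 apply Rmult_le_reg_l with c; auto.
 replace (c * (N v / c)) with (N v) by (field; lra). pose proof (Rabs_pos (v j)).
 apply Rle_trans with (c * l); auto. apply Rmult_le_compat_l; lra. Qed.

Lemma N_vzero N (HN : equiv_l1_norm N) : N vzero = 0.
Proof. destruct HN as [_ [_ [Hs _]]]. replace vzero with (vscal 0 vzero) at 1.
 rewrite Hs. rewrite Rabs_R0; lra. apply l1_vzero.
 apply functional_extensionality; intros; unfold vscal, vzero; lra. Qed.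

Lemma N_e_pos N (HN : equiv_l1_norm N) n : 0 < N (e n).
Proof. destruct HN as [Hp [Hd _]]. destruct (Rle_lt_or_eq_dec _ _ (Hp _ (l1_e n))) as [|E0]; auto.
 exfalso. symmetry in E0. apply Hd in E0; [|apply l1_e].
 assert (e n n = vzero n) by (rewrite E0; auto). unfold e, vzero in H.
 rewrite Nat.eqb_refl in H. lra. Qed.

Definition aa (N : seqR -> R) (n : nat) : R := INR (n + 1) / INR (n + 2) / N (e n).
Definition pp (N : seqR -> R) (n : nat) : seqR := vscal (aa N n) (e n).

Lemma aa_pos N (HN : equiv_l1_norm N) n : 0 < aa N n.
Proof. unfold aa. pose proof (N_e_pos N HN n).
 assert (0 < INR (n+1)) by (apply lt_0_INR; lia).
 assert (0 < INR (n+2)) by (apply lt_0_INR; lia).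
 apply Rdiv_lt_0_compat; auto. apply Rdiv_lt_0_compat; auto. Qed.

Lemma N_pp N (HN : equiv_l1_norm N) n : N (pp N n) = INR (n+1) / INR (n+2).
Proof. pose proof (aa_pos N HN n). pose proof (N_e_pos N HN n).
 destruct HN as [_ [_ [Hs _]]]. unfold pp. rewrite Hs by apply l1_e.
 rewrite Rabs_pos_eq by lra. unfold aa. field.
 repeat split; try lra; apply not_0_INR; lia. Qed.

Definition Kp (N : seqR -> R) (x : seqR) : Prop :=
  l1 x /\ (forall n, 0 <= x n) /\ (forall m, psum (fun k => x k / aa N k) m <= 1).

Lemma E_Kp N (HN : equiv_l1_norm N) x : E_set N x -> Kp N x.
Proof. intros [->|[n ->]].
 - split; [apply l1_vzero|]. split; [intros; unfold vzero; lra|].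
   intros m. rewrite (psum_ext _ (fun _ => 0)). clear. induction m; simpl; lra.
   intros k _. unfold vzero. unfold Rdiv. lra.
 - fold (aa N n). fold (pp N n). pose proof (aa_pos N HN n).
   split; [apply l1_vscal, l1_e|]. split.
   + intros k. unfold pp, vscal, e. destruct (Nat.eqb k n); lra.
   + intros m. rewrite (psum_ext _ (fun k => if Nat.eqb k n then 1 else 0)). apply psum_delta; lra.
     intros k _. unfold pp, vscal, e. destruct (Nat.eqb_spec k n).
     subst. field. lra. unfold Rdiv. pose proof (aa_pos N HN k). ring.
Qed.

Lemma Kp_convex N (HN : equiv_l1_norm N) : convex (Kp N).
Proof. intros x y t [Hx [Hx0 Hx1]] [Hy [Hy0 Hy1]] Ht.
 split; [apply l1_vadd; apply l1_vscal; auto|]. split.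
 - intros n. unfold vadd, vscal. specialize (Hx0 n). specialize (Hy0 n).
   assert (0 <= t * x n) by (apply Rmult_le_pos; lra).
   assert (0 <= (1-t) * y n) by (apply Rmult_le_pos; lra). lra.
 - intros m. rewrite (psum_ext _ (fun k => t * (x k / aa N k) + (1-t) * (y k / aa N k))).
   rewrite psum_plus, !psum_scal. specialize (Hx1 m). specialize (Hy1 m).
   assert (t * psum (fun k => x k / aa N k) m <= t * 1) by (apply Rmult_le_compat_l; lra).
   assert ((1-t) * psum (fun k => y k / aa N k) m <= (1-t) * 1) by (apply Rmult_le_compat_l; lra).
   lra.
   intros k _. unfold vadd, vscal. pose proof (aa_pos N HN k). field. lra.
Qed.

Lemma notKp_open N (HN : equiv_l1_norm N) x : l1 x -> ~ Kp N x ->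
  exists m d, 0 < d /\ forall z, (forall k, (k < m)%nat -> Rabs (z k - x k) < d) -> ~ Kp N z.
Proof. intros Hx HK.
 destruct (classic (forall n, 0 <= x n)) as [Hpos|Hneg].
 - assert (exists m, 1 < psum (fun k => x k / aa N k) m) as [m Hm].
   { apply NNPP. intros Hno. apply HK. split; auto. split; auto. intros m.
     apply Rnot_lt_le. intros Hlt. apply Hno. eauto. }
   set (W := psum (fun k => / aa N k) m).
   assert (HW : 0 <= W) by (apply psum_nonneg; intros k; pose proof (aa_pos N HN k);
     left; apply Rinv_0_lt_compat; auto).
   set (d := (psum (fun k => x k / aa N k) m - 1) / (W + 1)).
   assert (Hd : 0 < d) by (unfold d; apply Rdiv_lt_0_compat; lra).
   exists m, d. split; auto. intros z Hz [_ [_ Hz1]]. specialize (Hz1 m).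
   assert (psum (fun k => x k / aa N k - d * / aa N k) m <= psum (fun k => z k / aa N k) m).
   { apply psum_le. intros k Hk. specialize (Hz k Hk). apply Rabs_def2 in Hz.
     pose proof (aa_pos N HN k). unfold Rdiv.
     assert (0 < / aa N k) by (apply Rinv_0_lt_compat; auto).
     assert ((x k - d) * / aa N k <= z k * / aa N k) by (apply Rmult_le_compat_r; lra).
     lra. }
   rewrite (psum_ext _ (fun k => x k / aa N k + (-d) * / aa N k)) in H by (intros; lra).
   rewrite psum_plus, psum_scal in H. fold W in H.
   assert (d * W < psum (fun k => x k / aa N k) m - 1).
   { apply Rlt_le_trans with (d * (W + 1)).
     apply Rmult_lt_compat_l; lra. right. unfold d. field. lra. }
   lra.
 - apply not_all_ex_not in Hneg. destruct Hneg as [n Hn]. apply Rnot_le_lt in Hn.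
   exists (S n), (- x n). split; [lra|]. intros z Hz [_ [Hz0 _]].
   specialize (Hz n (Nat.lt_succ_diag_r n)). apply Rabs_def2 in Hz. specialize (Hz0 n). lra.
Qed.

Lemma psum_e_coord v k n : psum (fun j => v j * e k j) n = if Nat.ltb k n then v k else 0.
Proof. induction n; simpl; [lra|]. rewrite IHn. unfold e.
 destruct (Nat.ltb_spec k n), (Nat.ltb_spec k (S n)), (Nat.eqb_spec n k); subst; try lia; lra. Qed.

Lemma sum_e_coord v k : infinite_sum (fun j => v j * e k j) (v k).
Proof. intros eps Heps. exists k. intros n Hn. rewrite sum_psum, psum_e_coord.
 destruct (Nat.ltb_spec k (S n)); [|lia]. unfold Rdist. rewrite Rminus_diag, Rabs_R0; lra. Qed.

Lemma c0_e k : c0 (e k).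
Proof. intros eps Heps. exists (S k). intros n Hn. unfold e, Rdist.
 destruct (Nat.eqb_spec n k); [lia|]. rewrite Rminus_diag, Rabs_R0; lra. Qed.

Lemma Kp_wstar N (HN : equiv_l1_norm N) : wstar_closed (Kp N).
Proof. intros x Hx [_ HK]. destruct (notKp_open N HN x Hx HK) as [m [d [Hd Hz]]].
 exists (map e (seq 0 m)), d. split; [|split; auto].
 - apply Forall_forall. intros y Hy. apply in_map_iff in Hy. destruct Hy as [k [<- _]]. apply c0_e.
 - intros z Hzl Hys. split; auto. apply Hz. intros k Hk.
   destruct (Hys (e k)) as [s [Hs Hs']].
   { apply in_map. apply in_seq. lia. }
   rewrite (uniqueness_sum _ _ _ Hs (sum_e_coord (fun j => z j - x j) k)) in Hs'. exact Hs'.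
Qed.

Lemma Kp_normclosed N (HN : equiv_l1_norm N) : norm_closed N (Kp N).
Proof. intros x Hx Happ. apply NNPP. intros HK.
 destruct (notKp_open N HN x Hx HK) as [m [d [Hd Hz]]].
 destruct (N_lower N HN) as [c [Hc Hlow]].
 destruct (Happ (c * d)) as [s [Hs [Hsl HN']]]. apply Rmult_lt_0_compat; auto.
 apply (Hz s); auto. intros k _. rewrite <- Rabs_Ropp.
 replace (- (s k - x k)) with (vsub x s k) by (unfold vsub; ring).
 apply Rle_lt_trans with (N (vsub x s) / c). apply Hlow. apply l1_vsub; auto.
 apply Rmult_lt_reg_l with c; auto. replace (c * (N (vsub x s) / c)) with (N (vsub x s)) by (field; lra).
 lra.
Qed.

Lemma Rdiv_le_0_compat a b : 0 <= a -> 0 < b -> 0 <= a / b.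
Proof. intros; unfold Rdiv; apply Rmult_le_pos; auto; left; apply Rinv_0_lt_compat; auto. Qed.

Definition T (m : nat) (x : seqR) : seqR := fun k => if Nat.ltb k m then x k else 0.
Definition Rt (m : nat) (x : seqR) : seqR := fun k => if Nat.ltb k m then 0 else x k.

Lemma combo N (HN : equiv_l1_norm N) (C : seqR -> Prop) x :
  convex C -> (forall a, E_set N a -> C a) -> Kp N x ->
  forall m lam, 0 <= lam -> lam * psum (fun k => x k / aa N k) m < 1 -> C (vscal lam (T m x)).
Proof. intros HC HE [Hx [Hx0 Hx1]]. induction m; intros lam Hl Hlm.
 - replace (vscal lam (T 0 x)) with vzero. apply HE; left; auto.
   apply functional_extensionality; intros k; unfold vscal, T, vzero; simpl. destruct k; simpl; lra.
 - simpl in Hlm. pose proof (aa_pos N HN m) as Ha.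
   set (b := lam * (x m / aa N m)).
   assert (Hb : 0 <= b) by (unfold b; apply Rmult_le_pos; auto; apply Rdiv_le_0_compat; auto).
   assert (Hb1 : lam * psum (fun k => x k / aa N k) m + b < 1) by (unfold b; lra).
   assert (0 <= lam * psum (fun k => x k / aa N k) m).
   { apply Rmult_le_pos; auto. apply psum_nonneg. intros; apply Rdiv_le_0_compat; auto. apply aa_pos; auto. }
   assert (IH : C (vscal (lam / (1 - b)) (T m x))).
   { apply IHm. apply Rdiv_le_0_compat; lra.
     apply Rmult_lt_reg_l with (1 - b). lra.
     replace ((1 - b) * (lam / (1 - b) * psum (fun k => x k / aa N k) m)) with
       (lam * psum (fun k => x k / aa N k) m) by (field; lra). lra. }
   replace (vscal lam (T (S m) x)) with
     (vadd (vscal b (pp N m)) (vscal (1 - b) (vscal (lam / (1 - b)) (T m x)))).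
   apply HC; auto. apply HE. right. exists m. reflexivity. lra.
   assert (Hb2 : 1 - b <> 0) by lra.
   assert (Hb3 : aa N m - lam * x m <> 0).
   { replace (aa N m - lam * x m) with (aa N m * (1 - b)) by (unfold b; field; lra).
     apply Rmult_integral_contrapositive; split; lra. }
   apply functional_extensionality; intros k. unfold vadd, pp. unfold vscal, T, e.
   destruct (Nat.ltb_spec k m), (Nat.ltb_spec k (S m)), (Nat.eqb_spec k m); subst; try lia.
   all: unfold b in *; field; split; auto; lra.
Qed.

Lemma Rt_zero x m n : (n <= m)%nat -> psum (fun k => Rabs (Rt m x k)) n = 0.
Proof. intros H. induction n; simpl; [lra|]. rewrite IHn by lia. unfold Rt.
 destruct (Nat.ltb_spec n m); [|lia]. rewrite Rabs_R0; lra. Qed.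

Lemma Rt_eq x m n : (m <= n)%nat ->
  psum (fun k => Rabs (Rt m x k)) n + psum (fun k => Rabs (x k)) m = psum (fun k => Rabs (x k)) n.
Proof. intros H. induction n.
 - assert (m = 0%nat) by lia. subst. simpl. lra.
 - destruct (Nat.eq_dec m (S n)).
   + subst. rewrite Rt_zero by lia. lra.
   + simpl. rewrite <- IHn by lia. unfold Rt at 2. destruct (Nat.ltb_spec n m); [lia|]. lra.
Qed.

Lemma Rt_bound x m L : (forall n, psum (fun k => Rabs (x k)) n <= L) ->
  forall n, psum (fun k => Rabs (Rt m x k)) n <= L - psum (fun k => Rabs (x k)) m.
Proof. intros HL n. destruct (Nat.le_ge_cases n m).
 - rewrite Rt_zero by auto. specialize (HL m). lra.
 - pose proof (Rt_eq x m n H). specialize (HL n). lra.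
Qed.

Lemma approx N (HN : equiv_l1_norm N) x : Kp N x -> forall eta, 0 < eta ->
  exists z, (forall C, convex C -> (forall a, E_set N a -> C a) -> C z) /\ l1 z /\
   forall n, psum (fun k => Rabs (z k - x k)) n <= eta.
Proof. intros HK eta Heta. pose proof HK as [Hx [Hx0 Hx1]].
 destruct (l1_facts x Hx) as [L [_ [HL Htail]]].
 destruct (Htail (eta / 2)) as [m Hm]; [lra|].
 assert (HL0 : 0 <= L) by (specialize (HL 0%nat); simpl in HL; lra).
 set (q := (eta / 2) / (L + 1 + eta / 2)).
 assert (Hq : q * (L + 1 + eta / 2) = eta / 2) by (unfold q; field; lra).
 assert (Hq0 : 0 < q) by (unfold q; apply Rdiv_lt_0_compat; lra).
 assert (Hq1 : q < 1).
 { apply Rmult_lt_reg_r with (L + 1 + eta / 2). lra. rewrite Hq. lra. }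
 exists (vscal (1 - q) (T m x)). split; [|split].
 - intros C HC HE. apply (combo N HN C x HC HE HK). lra.
   specialize (Hx1 m). assert ((1 - q) * psum (fun k => x k / aa N k) m <= (1 - q) * 1)
     by (apply Rmult_le_compat_l; lra). lra.
 - apply l1_vscal. apply (l1_bound _ L). intros n. apply Rle_trans with (psum (fun k => Rabs (x k)) n); auto.
   apply psum_le. intros k _. unfold T. destruct (Nat.ltb k m); [lra|rewrite Rabs_R0; apply Rabs_pos].
 - intros n.
   apply Rle_trans with (psum (fun k => q * Rabs (x k) + Rabs (Rt m x k)) n).
   { apply psum_le. intros k _. unfold vscal, T, Rt. destruct (Nat.ltb k m).
     + replace ((1 - q) * x k - x k) with (- q * x k) by ring. rewrite Rabs_mult, Rabs_Ropp, Rabs_R0.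
       rewrite (Rabs_pos_eq q) by lra. lra.
     + replace ((1 - q) * 0 - x k) with (- x k) by ring. rewrite Rabs_Ropp.
       pose proof (Rabs_pos (x k)). assert (0 <= q * Rabs (x k)) by (apply Rmult_le_pos; lra). lra. }
   rewrite psum_plus, psum_scal. pose proof (Rt_bound x m L HL n).
   specialize (HL n). assert (q * psum (fun k => Rabs (x k)) n <= q * L) by (apply Rmult_le_compat_l; lra).
   assert (q * L <= eta / 2) by nra. lra.
Qed.

Lemma c0_bound y : c0 y -> exists B, 0 <= B /\ forall k, Rabs (y k) <= B.
Proof. intros Hy. destruct (Hy 1) as [N0 HN0]; [lra|].
 set (P := psum (fun k => Rabs (y k)) (S N0)).
 assert (HP : 0 <= P) by (apply psum_nonneg; intros; apply Rabs_pos).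
 exists (1 + P). split; [lra|]. intros k. destruct (Nat.le_gt_cases N0 k).
 - specialize (HN0 k H). unfold Rdist in HN0. rewrite Rminus_0_r in HN0. lra.
 - assert (Rabs (y k) <= P). apply (psum_term (fun k => Rabs (y k))). intros; apply Rabs_pos. lia. lra.
Qed.

Lemma list_bound ys : Forall c0 ys -> exists B, 0 <= B /\ forall y, In y ys -> forall k, Rabs (y k) <= B.
Proof. induction 1.
 - exists 0. split; [lra|]. intros y [].
 - destruct (c0_bound x H) as [B1 [HB1 H1]]. destruct IHForall as [B2 [HB2 H2]].
   exists (Rmax B1 B2). split. apply Rle_trans with B1; auto; apply Rmax_l.
   intros y [<-|Hy] k. apply Rle_trans with B1; auto; apply Rmax_l.
   apply Rle_trans with B2; auto; apply Rmax_r.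
Qed.

Lemma Kp_sub_wstar N (HN : equiv_l1_norm N) x : Kp N x -> wstar_closed_hull (E_set N) x.
Proof. intros HK. split; [apply HK|]. intros C HC Hwc HE. apply NNPP; intros Hn.
 destruct (Hwc x (proj1 HK) (conj (proj1 HK) Hn)) as [ys [eps [Hys [Heps H]]]].
 destruct (list_bound ys Hys) as [B [HB HBy]].
 destruct (approx N HN x HK (eps / (B + 1))) as [z [HCz [Hzl Hz]]].
 apply Rdiv_lt_0_compat; lra.
 assert (Hne : l1 z /\ ~ C z).
 { apply H; auto. intros y Hy.
   destruct (abs_cv (fun k => (z k - x k) * y k) (B * (eps / (B + 1)))) as [s [Hs Hs']].
   { intros m. apply Rle_trans with (psum (fun k => B * Rabs (z k - x k)) m).
     apply psum_le. intros k _. rewrite Rabs_mult, Rmult_comm. apply Rmult_le_compat_r.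
     apply Rabs_pos. apply HBy; auto.
     rewrite psum_scal. apply Rmult_le_compat_l; auto. }
   exists s. split; auto. apply Rle_lt_trans with (B * (eps / (B + 1))); auto.
   apply Rlt_le_trans with ((B + 1) * (eps / (B + 1))).
   apply Rmult_lt_compat_r. apply Rdiv_lt_0_compat; lra. lra.
   right. field. lra. }
 apply (proj2 Hne). apply HCz; auto.
Qed.

Lemma Kp_sub_nch N (HN : equiv_l1_norm N) x : Kp N x -> norm_closed_hull N (E_set N) x.
Proof. intros HK. split; [apply HK|]. intros C HC Hnc HE. apply Hnc; [apply HK|].
 intros eps Heps. destruct (N_upper N HN) as [Cn [HCn Hup]].
 destruct (approx N HN x HK (eps / (2 * Cn))) as [z [HCz [Hzl Hz]]].
 apply Rdiv_lt_0_compat; lra.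
 exists z. split; [apply HCz; auto|]. split; auto.
 apply Rle_lt_trans with (Cn * (eps / (2 * Cn))).
 apply Hup. intros m. rewrite (psum_ext _ (fun k => Rabs (z k - x k))). apply Hz.
 intros k _. unfold vsub. apply Rabs_minus_sym.
 replace (Cn * (eps / (2 * Cn))) with (eps / 2) by (field; lra). lra.
Qed.

Lemma wstar_sub_Kp N (HN : equiv_l1_norm N) x : wstar_closed_hull (E_set N) x -> Kp N x.
Proof. intros [_ H]. apply H. apply Kp_convex; auto. apply Kp_wstar; auto. apply E_Kp; auto. Qed.

Lemma nch_sub_Kp N (HN : equiv_l1_norm N) x : norm_closed_hull N (E_set N) x -> Kp N x.
Proof. intros [_ H]. apply H. apply Kp_convex; auto. apply Kp_normclosed; auto. apply E_Kp; auto. Qed.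

Lemma l1_T m x : l1 x -> l1 (T m x).
Proof. intros Hx. destruct (l1_facts x Hx) as [L [_ [HL _]]].
 apply (l1_bound _ L). intros n. apply Rle_trans with (psum (fun k => Rabs (x k)) n); auto.
 apply psum_le. intros k _. unfold T. destruct (Nat.ltb k m); [lra|rewrite Rabs_R0; apply Rabs_pos]. Qed.

Lemma l1_Rt m x : l1 x -> l1 (Rt m x).
Proof. intros Hx. destruct (l1_facts x Hx) as [L [_ [HL _]]].
 apply (l1_bound _ L). intros n. apply Rle_trans with (psum (fun k => Rabs (x k)) n); auto.
 apply psum_le. intros k _. unfold Rt. destruct (Nat.ltb k m); [rewrite Rabs_R0; apply Rabs_pos|lra]. Qed.

Lemma N_T N (HN : equiv_l1_norm N) x : l1 x -> (forall n, 0 <= x n) ->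
  forall m, N (T m x) <= psum (fun k => x k * N (e k)) m.
Proof. intros Hx Hx0. pose proof HN as [_ [_ [Hs [Ht _]]]]. induction m.
 - replace (T 0 x) with vzero. rewrite N_vzero; auto. simpl; lra.
   apply functional_extensionality; intros k; unfold T, vzero; destruct k; auto.
 - replace (T (S m) x) with (vadd (T m x) (vscal (x m) (e m))).
   simpl. eapply Rle_trans. apply Ht. apply l1_T; auto. apply l1_vscal, l1_e.
   rewrite Hs by apply l1_e. rewrite Rabs_pos_eq by auto. lra.
   apply functional_extensionality; intros k; unfold vadd, T, vscal, e.
   destruct (Nat.ltb_spec k m), (Nat.ltb_spec k (S m)), (Nat.eqb_spec k m); subst; try lia; lra.
Qed.

Lemma INR_ratio k : INR (k + 1) / INR (k + 2) = 1 - / INR (k + 2).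
Proof. replace (k + 2)%nat with (S (k + 1)) by lia. rewrite S_INR.
 assert (0 < INR (k+1)) by (apply lt_0_INR; lia). field. lra. Qed.

Lemma Kp_N_lt N (HN : equiv_l1_norm N) x : Kp N x -> N x < 1.
Proof. intros HK. pose proof HK as [Hx [Hx0 Hx1]].
 destruct (classic (exists j, x j <> 0)) as [[j Hj]|Hall].
 2:{ replace x with vzero. rewrite N_vzero; auto; lra.
     apply functional_extensionality; intros k. unfold vzero.
     apply NNPP. intros Hk. apply Hall. exists k. auto. }
 assert (Hxj : 0 < x j) by (specialize (Hx0 j); lra).
 pose proof (aa_pos N HN j) as Haj.
 assert (HIj : 0 < INR (j + 2)) by (apply lt_0_INR; lia).
 set (g := x j / aa N j * / INR (j + 2)).
 assert (Hg : 0 < g) by (unfold g; apply Rmult_lt_0_compat; [apply Rdiv_lt_0_compat; auto|apply Rinv_0_lt_compat; auto]).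
 destruct (N_upper N HN) as [Cn [HCn Hup]].
 destruct (l1_facts x Hx) as [L [_ [HL Htail]]].
 destruct (Htail (g / (2 * Cn))) as [m0 Hm0]. apply Rdiv_lt_0_compat; lra.
 set (m := Nat.max m0 (S j)).
 assert (Htm : L - psum (fun k => Rabs (x k)) m <= L - psum (fun k => Rabs (x k)) m0).
 { pose proof (psum_mono (fun k => Rabs (x k)) m0 m (fun k => Rabs_pos (x k))). unfold m in *. 
   assert (psum (fun k => Rabs (x k)) m0 <= psum (fun k => Rabs (x k)) (Nat.max m0 (S j))) by (apply H; lia). lra. }
 assert (HR : N (Rt m x) <= Cn * (L - psum (fun k => Rabs (x k)) m)).
 { apply Hup. apply Rt_bound; auto. }
 assert (HTm : N (T m x) <= 1 - g).
 { eapply Rle_trans. apply N_T; auto.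
   rewrite (psum_ext _ (fun k => x k / aa N k + - (x k / aa N k * / INR (k + 2)))).
   2:{ intros k _. pose proof (aa_pos N HN k). pose proof (N_e_pos N HN k).
       unfold aa. assert (0 < INR (k+1)) by (apply lt_0_INR; lia).
       replace (INR (k+2)) with (INR (k+1) + 1).
       field. repeat split; lra.
       replace (k + 2)%nat with (S (k + 1)) by lia. rewrite S_INR. lra. }
   rewrite psum_plus, psum_opp. specialize (Hx1 m).
   assert (g <= psum (fun k => x k / aa N k * / INR (k + 2)) m).
   { apply (psum_term (fun k => x k / aa N k * / INR (k + 2))).
     intros k. apply Rmult_le_pos. apply Rdiv_le_0_compat; auto. apply aa_pos; auto.
     left; apply Rinv_0_lt_compat, lt_0_INR; lia. unfold m; lia. }
   lra. }
 replace x with (vadd (T m x) (Rt m x)).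
 2:{ apply functional_extensionality; intros k; unfold vadd, T, Rt. destruct (Nat.ltb k m); lra. }
 pose proof HN as [_ [_ [_ [Ht _]]]].
 eapply Rle_lt_trans. apply Ht. apply l1_T; auto. apply l1_Rt; auto.
 assert (Cn * (L - psum (fun k => Rabs (x k)) m0) < g / 2).
 { replace (g / 2) with (Cn * (g / (2 * Cn))) by (field; lra). apply Rmult_lt_compat_l; auto. }
 assert (Cn * (L - psum (fun k => Rabs (x k)) m) <= Cn * (L - psum (fun k => Rabs (x k)) m0))
   by (apply Rmult_le_compat_l; lra).
 lra.
Qed.

Lemma lub_one N (HN : equiv_l1_norm N) b : (forall n, N (pp N n) <= b) -> 1 <= b.
Proof. intros H. apply Rnot_lt_le. intros Hb.
 destruct (INR_unbounded (/ (1 - b))) as [n Hn].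
 specialize (H n). rewrite N_pp, INR_ratio in H by auto.
 assert (0 < / (1 - b)) by (apply Rinv_0_lt_compat; lra).
 assert (INR n < INR (n + 2)) by (apply lt_INR; lia).
 assert (/ INR (n + 2) < 1 - b).
 { rewrite <- (Rinv_inv (1 - b)). apply Rinv_lt_contravar. apply Rmult_lt_0_compat; lra. lra. }
 lra.
Qed.

Lemma N_neg N (HN : equiv_l1_norm N) c : l1 c -> N (vsub vzero c) = N c.
Proof. intros Hc. pose proof HN as [_ [_ [Hs _]]].
 replace (vsub vzero c) with (vscal (-1) c).
 rewrite Hs by auto. rewrite Rabs_left by lra. lra.
 apply functional_extensionality; intros k; unfold vsub, vscal, vzero; lra. Qed.

Theorem mainTheorem7 (N : seqR -> R) (HN : equiv_l1_norm N) :
  let K := wstar_closed_hull (E_set N) in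
  (forall x, K x <-> norm_closed_hull N (E_set N) x) /\
  (forall k, K k -> N k <= 1) /\
  is_lub (fun r => exists k, K k /\ r = N k) 1 /\
  ~ (exists k, K k /\ N k = 1) /\
  (convex K /\ norm_closed N K /\ Nbounded N K /\ ~ remotal N K vzero).
Proof.
 intros K.
 assert (HKK : forall x, K x <-> Kp N x).
 { intros x; split; [apply wstar_sub_Kp; auto|apply Kp_sub_wstar; auto]. }
 assert (Hpp : forall n, K (pp N n)).
 { intros n. apply HKK. apply E_Kp; auto. right. exists n. reflexivity. }
 assert (Hlt : forall k, K k -> N k < 1).
 { intros k Hk. apply (Kp_N_lt N HN). apply (proj1 (HKK k)). exact Hk. }
 split; [|split; [|split; [|split]]].
 - intros x. rewrite HKK. split; [apply Kp_sub_nch; auto|apply nch_sub_Kp; auto].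
 - intros k Hk. left. auto.
 - split.
   + intros r [k [Hk ->]]. left; auto.
   + intros b Hb. apply (lub_one N HN). intros n. apply Hb. exists (pp N n). auto.
 - intros [k [Hk Hk1]]. specialize (Hlt k Hk). lra.
 - split; [|split; [|split]].
   + intros x y t Hx Hy Ht. apply (proj2 (HKK _)). apply (Kp_convex N HN); auto.
     apply (proj1 (HKK _)); auto. apply (proj1 (HKK _)); auto.
   + intros x Hx Happ. apply (proj2 (HKK _)). apply (Kp_normclosed N HN); auto.
     intros eps Heps. destruct (Happ eps Heps) as [s [Hs1 Hs2]]. exists s. rewrite <- HKK. auto.
   + exists 1. intros x Hx. left. auto.
   + intros [c [Hc [Hub _]]].
     assert (Hcl : l1 c) by (apply HKK in Hc; apply Hc).
     rewrite N_neg in Hub by auto.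
     assert (1 <= N c).
     { apply (lub_one N HN). intros n. rewrite <- (N_neg N HN (pp N n)).
       apply Hub. exists (pp N n). auto. apply (proj1 (HKK _) (Hpp n)). }
     specialize (Hlt c Hc). lra.
Qed.
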